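(* Let $T$ be an $S$-regular matrix with vertex weights $b\in\mathbb{R}^k$ and edge weights $F\in M_k(\mathbb{C})$, whose underlying graph $G=(V,E)$ has equitable partition $V_1,\dots,V_k$ with quotient matrix $S=(s_{ij})$ and cell function $\tau$. Let $M=(S\circ F)+\operatorname{diag}(b)$, where $S\circ F$ is the entrywise product. Then: (1) $M$ is diagonalizable; (2) if $\lambda$ is an eigenvalue of $M$ with eigenvector $\psi\in\mathbb{R}^k$, then $\lambda$ is an eigenvalue of $T$ with eigenvector $\overline{\psi}\in\mathbb{R}^{|V|}$ defined by $\overline{\psi}(v)=\psi(\tau(v))$; (3) if $\phi$ is an eigenvector of $T$ whose eigenvalue is not an eigenvalue of $M$, then $\sum_{v\in V_i}\phi(v)=0$ for every $1\le i\le k$, and $\sum_{v\in V}\phi(v)=0$.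
   Context: All graphs are simple, undirected and connected. A graph $G=(V,E)$ is $S$-regular, for a $k\times k$ matrix $S=(s_{ij})$ with nonnegative integer entries, if $V$ has a partition into nonempty cells $V_1,\dots,V_k$ such that every $v\in V_i$ has exactly $s_{ij}$ neighbours in $V_j$. Write $n_i=|V_i|$; then $s_{ij}n_i=s_{ji}n_j$ for all $i,j$. The cell function $\tau:V\to\{1,\dots,k\}$ sends $v\in V_i$ to $i$. The underlying graph of a matrix $T$ indexed by a set $V$ is the graph on $V$ with an edge $uv$ ($u\neq v$) iff $T_{uv}\neq 0$. An $S$-regular matrix is a Hermitian matrix $T$ indexed by $V$ such that: its underlying graph $G$ (ignoring loops) is $S$-regular with partition $V_1,\dots,V_k$; there is $b\in\mathbb{R}^k$ (vertex weights) with $T_{uu}=b(i)$ for $u\in V_i$; and there is $F\in M_k(\mathbb{C})$ (edge weights) with $F_{ij}\neq 0$ for all $i,j$ such that $T_{uv}=F_{ij}$ whenever $u\in V_i$, $v\in V_j$ are adjacent in $G$ (and $T_{uv}=0$ for distinct nonadjacent $u,v$). *)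

(* Defs.v *)
From mathcomp Require Import all_boot all_order all_algebra.
Set Implicit Arguments. Unset Strict Implicit. Unset Printing Implicit Defensive.
Import Order.TTheory GRing.Theory Num.Theory.
Local Open Scope ring_scope.

Definition underlying_adj (C : numClosedFieldType) n (T : 'M[C]_n) : rel 'I_n :=
  fun u v => (u != v) && (T u v != 0).

Definition graph_connected n (adj : rel 'I_n) : Prop :=
  forall u v : 'I_n, connect adj u v.

Definition S_regular_graph n k (adj : rel 'I_n) (S : 'M[nat]_k) (tau : 'I_n -> 'I_k) : Prop :=
  (forall i : 'I_k, exists v : 'I_n, tau v = i) /\
  (forall (i j : 'I_k) (v : 'I_n), tau v = i ->
      #|[set u : 'I_n | adj v u && (tau u == j)]| = S i j).

Definition hermitian_mx (C : numClosedFieldType) n (T : 'M[C]_n) : Prop :=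
  forall u v, T u v = (T v u)^*.

Definition S_regular_matrix (C : numClosedFieldType) n k (T : 'M[C]_n)
    (S : 'M[nat]_k) (tau : 'I_n -> 'I_k) (b : 'I_k -> C) (F : 'M[C]_k) : Prop :=
  [/\ hermitian_mx T,
      graph_connected (underlying_adj T) &
      S_regular_graph (underlying_adj T) S tau] /\
  [/\ (forall i, b i \is Num.real),
      (forall i j, F i j != 0),
      (forall u, T u u = b (tau u)) &
      (forall u v, underlying_adj T u v -> T u v = F (tau u) (tau v))].

Definition quotient_mx (C : numClosedFieldType) k (S : 'M[nat]_k) (b : 'I_k -> C)
    (F : 'M[C]_k) : 'M[C]_k :=
  \matrix_(i, j) ((S i j)%:R * F i j) + diag_mx (\row_i b i).

Definition lift_vec (C : numClosedFieldType) n k (tau : 'I_n -> 'I_k) (psi : 'cV[C]_k)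
  : 'cV[C]_n := \col_v psi (tau v) 0.

(* Main.v *)
Require Import Defs.
From mathcomp Require Import all_boot all_order all_algebra.
From mathcomp Require Import ring.
Import Order.TTheory GRing.Theory Num.Theory.
Local Open Scope ring_scope.

Lemma split_sum (C : numClosedFieldType) n k (adj : rel 'I_n) (S : 'M[nat]_k)
  (tau : 'I_n -> 'I_k) (u : 'I_n) (f : 'I_n -> C) (h : 'I_k -> C) :
  (forall j, #|[set w | adj u w && (tau w == j)]| = S (tau u) j) ->
  (forall v, v != u -> ~~ adj u v -> f v = 0) ->
  (forall v, adj u v -> f v = h (tau v)) ->
  adj u u = false ->
  \sum_v f v = f u + \sum_j (S (tau u) j)%:R * h j.
Proof.
move=> Hreg Hz Hf Hirr.
rewrite (bigD1 u) //=; congr (_ + _).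
transitivity (\sum_(v | adj u v) f v).
  rewrite [LHS]big_mkcond [RHS]big_mkcond; apply: eq_bigr => v _.
  case: (eqVneq v u) => [->|nvu]; first by rewrite Hirr.
  by case: (boolP (adj u v)) => a //=; rewrite Hz.
rewrite (partition_big tau predT) //=; apply: eq_bigr => j _.
transitivity (\sum_(v | adj u v && (tau v == j)) h j).
  by apply: eq_bigr => v /andP[a /eqP <-]; exact: Hf.
rewrite (eq_bigl (fun v => v \in [set w | adj u w && (tau w == j)])); last first.
  by move=> v; rewrite inE.
by rewrite sumr_const Hreg mulr_natl.
Qed.

Lemma dcount n k (adj : rel 'I_n) (S : 'M[nat]_k) (tau : 'I_n -> 'I_k)
  (Hsym : forall u v, adj u v = adj v u)
  (Hreg : forall i j v, tau v = i -> #|[set u | adj v u && (tau u == j)]| = S i j) i j :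
  (#|[set v | tau v == i]| * S i j = #|[set v | tau v == j]| * S j i)%N.
Proof.
have E : forall i j, (#|[set v | tau v == i]| * S i j =
   \sum_v \sum_u ((tau v == i) && adj v u && (tau u == j) : nat))%N.
  move=> i0 j0; rewrite mulnC -sum1_card big_distrr /= big_mkcond /=.
  apply: eq_bigr => v _; rewrite inE; case: eqP => [Hv|] /=; last first.
    by move=> _; rewrite big1.
  rewrite muln1 -(Hreg _ _ _ Hv) -sum1_card big_mkcond /=.
  by apply: eq_bigr => u _; rewrite inE; case: (_ && _).
rewrite !E [in RHS]exchange_big /=; apply: eq_bigr => v _; apply: eq_bigr => u _.
rewrite [adj u v]Hsym; case: (tau v == i); case: (tau u == j); rewrite ?andbT ?andbF //=.
Qed.

Theorem mainTheorem1 (C : numClosedFieldType) (n k : nat) (T : 'M[C]_n)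
    (S : 'M[nat]_k) (tau : 'I_n -> 'I_k) (b : 'I_k -> C) (F : 'M[C]_k) :
  S_regular_matrix T S tau b F ->
  let M := quotient_mx S b F in
  [/\ diagonalizable M,
      (forall (lambda : C) (psi : 'cV[C]_k), psi != 0 -> M *m psi = lambda *: psi ->
         lift_vec tau psi != 0 /\ T *m lift_vec tau psi = lambda *: lift_vec tau psi) &
      (forall (lambda : C) (phi : 'cV[C]_n), phi != 0 -> T *m phi = lambda *: phi ->
         ~~ eigenvalue M lambda ->
         (forall i : 'I_k, \sum_(v : 'I_n | tau v == i) phi v 0 = 0) /\
         \sum_(v : 'I_n) phi v 0 = 0)].
Proof.
move=> [[Herm Hconn [Hcells Hreg]] [Hb HF Hdiag Hedge]] M.
set adj := underlying_adj T in Hreg Hedge.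
have Hsym : forall u v, adj u v = adj v u.
  by move=> u v; rewrite /adj /underlying_adj eq_sym Herm conjC_eq0.
have Hirr : forall u, adj u u = false by move=> u; rewrite /adj /underlying_adj eqxx.
have Hreg' : forall u j, #|[set w | adj u w && (tau w == j)]| = S (tau u) j.
  by move=> u j; exact: Hreg.
have Mij : forall i j, M i j = (S i j)%:R * F i j + b i *+ (i == j).
  by move=> i j; rewrite !mxE.
have key : forall psi : 'cV_k, T *m lift_vec tau psi = lift_vec tau (M *m psi).
  move=> psi; apply/matrixP => u z; rewrite (ord1 z) !mxE.
  rewrite (@split_sum _ _ _ _ _ _ u _ (fun j => F (tau u) j * psi j 0) (Hreg' u)); last first.
  - exact: Hirr.
  - by move=> v a; rewrite mxE (Hedge _ _ a).
  - move=> v nvu; rewrite /adj /underlying_adj eq_sym nvu /= negbK => /eqP ->.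
    by rewrite mul0r.
  rewrite Hdiag mxE; under [RHS]eq_bigr => j _ do rewrite Mij mulrDl.
  rewrite big_split /= addrC; congr (_ + _); last first.
    by apply: eq_bigr => j _; rewrite mulrA.
  rewrite (bigD1 (tau u)) //= eqxx mulr1n big1 ?addr0 //.
  by move=> j /negbTE; rewrite eq_sym => ->; rewrite mulr0n mul0r.
pose nn i := #|[set v | tau v == i]|.
have nnz : forall i, (nn i)%:R != 0 :> C.
  move=> i; rewrite pnatr_eq0 -lt0n; apply/card_gt0P.
  by have [v Hv] := Hcells i; exists v; rewrite inE Hv.
have DC : forall i j, (nn i * S i j = nn j * S j i)%N.
  by move=> i j; apply: (@dcount n k adj S tau Hsym Hreg i j).
split => [| lambda psi psi0 Hpsi | lambda phi phi0 Hphi Hnev].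
- have Fc : forall i j, (0 < S i j)%N -> F i j = (F j i)^*.
    move=> i j; have [v Hv] := Hcells i; rewrite -(Hreg _ _ _ Hv).
    move=> /card_gt0P [u]; rewrite inE => /andP [a /eqP Hu].
    by rewrite -Hv -Hu -(Hedge _ _ a) Herm (Hedge u v) // Hsym.
  have MH : forall i j, (nn i)%:R * M i j = (nn j)%:R * (M j i)^*.
    move=> i j; rewrite !Mij rmorphD rmorphM /= conjC_nat rmorphMn /= (conj_Creal (Hb j)).
    case: (eqVneq i j) => [<-|ne].
      case: (posnP (S i i)) => [->|pos]; first by rewrite !mul0r.
      by rewrite -Fc.
    rewrite !mulr0n !addr0 !mulrA -!natrM.
    case: (posnP (S i j)) => [Z|pos].
      by rewrite Z muln0 mul0r -(DC i j) Z muln0 mul0r.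
    by rewrite (DC i j) (Fc _ _ pos).
  clearbody M.
  pose d i := sqrtC ((nn i)%:R : C).
  have dnz : forall i, d i != 0 by move=> i; rewrite /d sqrtC_eq0 nnz.
  have dc : forall i, (d i)^* = d i.
    by move=> i; apply: geC0_conj; rewrite /d sqrtC_ge0 ler0n.
  have d2 : forall i, d i ^+ 2 = (nn i)%:R by move=> i; rewrite /d sqrtCK.
  pose H := \matrix_(i, j) (d i * M i j / d j).
  have Hh : H \is hermsymmx.
    apply/is_hermitianmxP; rewrite expr0 scale1r; apply/matrixP => i j.
    rewrite !mxE rmorphM rmorphM /= fmorphV !dc.
    have E : (M j i)^* = d i ^+ 2 * M i j / d j ^+ 2.
      by rewrite !d2 MH mulrC mulKf.
    rewrite E -[X in _ = _ / X]/((d i)^*) dc; field; by rewrite !dnz.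
  have /orthomx_spectralP HE := hermitian_normalmx Hh.
  set P := spectralmx H in HE; set sp := spectral_diag H in HE.
  have Pu : P \in unitmx by exact: spectral_unit.
  pose D : 'M[C]_k := diag_mx (\row_i d i).
  have Du : D \in unitmx.
    rewrite unitmxE unitfE det_diag; apply/prodf_neq0 => i _; by rewrite mxE dnz.
  have DM : D *m M = H *m D.
    apply/matrixP => i j; rewrite mul_diag_mx mul_mx_diag !mxE.
    by rewrite mulfVK.
  exists (P *m D); first by rewrite unitmx_mul Pu Du.
  have : similar (P *m D) M (diag_mx sp).
    apply/similarP; first by rewrite unitmx_mul Pu Du.
    rewrite -mulmxA DM mulmxA {1}HE !mulmxA mulmxV // mul1mx //.
  by move=> Hs; apply/similar_diagPex; exists sp.
- split.
    apply/eqP => H0; move/eqP: psi0; apply; apply/matrixP => j z; rewrite (ord1 z).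
    have [v Hv] := Hcells j; have := congr1 (fun A : 'cV[C]_n => A v 0) H0.
    by rewrite !mxE Hv.
  by rewrite key Hpsi; apply/matrixP => u z; rewrite !mxE.
pose R : 'M[C]_(k, n) := \matrix_(i, v) ((tau v == i)%:R / (nn i)%:R).
have RT : R *m T = M *m R.
  apply/matrixP => i u; rewrite !mxE.
  rewrite (@split_sum _ _ _ _ _ _ u _ (fun j => (j == i)%:R / (nn i)%:R * F j (tau u)) (Hreg' u)); last first.
  - exact: Hirr.
  - by move=> v a; rewrite mxE (Hedge v u) // Hsym.
  - move=> v nvu; rewrite Hsym /adj /underlying_adj nvu /= negbK => /eqP ->.
    by rewrite mulr0.
  rewrite (bigD1 i) //= eqxx big1 ?addr0; last first.
    by move=> j /negbTE ->; rewrite !mul0r mulr0.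
  rewrite (bigD1 (tau u)) //= big1 ?addr0; last first.
    by move=> j; rewrite eq_sym => /negbTE H; rewrite /R !mxE H mul0r mulr0.
  rewrite Mij /R !mxE eqxx Hdiag.
  case: (eqVneq (tau u) i) => [<-|ne].
    rewrite /= !mulr1n; field; exact: nnz.
  rewrite /= !mulr0n !mulr1n.
  have E : (nn (tau u))%:R * (S (tau u) i)%:R = (nn i)%:R * (S i (tau u))%:R :> C.
    by rewrite -!natrM DC.
  have E' : (S (tau u) i)%:R = (nn i)%:R * (S i (tau u))%:R / (nn (tau u))%:R :> C.
    by rewrite -E mulrC mulKf.
  rewrite E'; field; rewrite ?nnz //.
have w0 : R *m phi = 0.
  apply/eqP; apply: contraNT Hnev => wnz.
  have Hw : (lambda%:M - M) *m (R *m phi) = 0.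
    by rewrite mulmxBl mul_scalar_mx mulmxA -RT -mulmxA Hphi -scalemxAr subrr.
  have /det0P [v vnz Hv] : \det (lambda%:M - M) == 0.
    rewrite -det_tr; apply/det0P; exists (R *m phi)^T; first by rewrite trmx_eq0.
    by rewrite -trmx_mul Hw trmx0.
  apply/eigenvalueP; exists v => //.
  by move/eqP: Hv; rewrite mulmxBr mul_mx_scalar subr_eq0 => /eqP <-.
have Si : forall i, \sum_(v | tau v == i) phi v 0 = 0.
  move=> i; have := congr1 (fun A : 'cV[C]_k => A i 0) w0; rewrite !mxE => H.
  transitivity ((nn i)%:R * \sum_v R i v * phi v 0); last by rewrite H mulr0.
  rewrite big_distrr big_mkcond /=; apply: eq_bigr => v _; rewrite /R mxE.
  case: (tau v == i) => /=; rewrite ?mulr1n ?mulr0n; field; exact: nnz.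
split => //.
by rewrite (partition_big tau predT) //= big1 // => i _; exact: Si.
Qed.
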